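(* Let $k\ge 2$ be an integer. Then $\alpha_{2k+t,\,k-1}=k$ for all integers $t\ge 0$.
   Context: Let $\mathbb{K}$ be a field. For $n\ge 3$, $Q_n$ is the cycle graph on vertices $1,\dots,n$ (edges $\{i,i+1\}$ for $1\le i\le n-1$ and $\{n,1\}$); $B_n$ is the simplicial complex on $\{0,\dots,n+1\}$ whose facets are $\{0,i,j\}$ and $\{n+1,i,j\}$ for each edge $\{i,j\}$ of $Q_n$ (boundary of the bipyramid over the $n$-gon); $I_{B_n}\subset R=\mathbb{K}[x_0,\dots,x_{n+1}]$ is its Stanley-Reisner ideal, generated by $\prod_{i\in\tau}x_i$ over non-faces $\tau$. For a homogeneous ideal $I$, $I^{(m)}=R\cap\bigcap_{P\in\mathrm{Ass}(I)}I^mR_P$, $\alpha(I)=\min\{t:I_t\ne0\}$, and $\alpha_{n,m}:=\alpha(I_{B_n}^{(m)})$. *)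

(* Defs.v *)
From HB Require Import structures.
From mathcomp Require Import all_boot all_order all_algebra.
From mathcomp Require Import mpoly.
Set Implicit Arguments. Unset Strict Implicit. Unset Printing Implicit Defensive.
Import Order.TTheory GRing.Theory.
Local Open Scope ring_scope.

Definition ideal_gen (R : comRingType) (S : R -> Prop) : R -> Prop :=
  fun p => exists (l : nat) (c g : 'I_l -> R),
    (forall i, S (g i)) /\ p = \sum_(i < l) c i * g i.

Definition ideal_pow (R : comRingType) (I : R -> Prop) (m : nat) : R -> Prop :=
  ideal_gen (fun p => exists g : 'I_m -> R, (forall i, I (g i)) /\ p = \prod_(i < m) g i).

Definition is_ideal (R : comRingType) (P : R -> Prop) : Prop :=
  [/\ P 0, (forall a b, P a -> P b -> P (a + b)) & (forall r a, P a -> P (r * a))].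

Definition is_prime_ideal (R : comRingType) (P : R -> Prop) : Prop :=
  [/\ is_ideal P, ~ P 1 & (forall a b, P (a * b) -> P a \/ P b)].

(* P \in Ass(I) : P is a prime ideal of the form (I : f) for some f in R. *)
Definition associated_prime (R : comRingType) (I P : R -> Prop) : Prop :=
  is_prime_ideal P /\ exists f : R, forall g, P g <-> I (g * f).

(* Symbolic power I^(m) = R ∩ ⋂_{P ∈ Ass(I)} I^m R_P.  For a domain R,
   g ∈ R lies in I^m R_P iff s g ∈ I^m for some s ∉ P. *)
Definition symbolic_power (R : comRingType) (I : R -> Prop) (m : nat) : R -> Prop :=
  fun g => forall P, associated_prime I P -> exists s, ~ P s /\ ideal_pow I m (s * g).

Definition homog_of_deg (n : nat) (K : fieldType) (d : nat) (p : {mpoly K[n]}) : bool :=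
  all (fun m => mdeg m == d) (msupp p).

Definition alpha_is (n : nat) (K : fieldType) (I : {mpoly K[n]} -> Prop) (a : nat) : Prop :=
  (exists p, I p /\ p != 0 /\ homog_of_deg a p) /\
  (forall t p, (t < a)%N -> I p -> homog_of_deg t p -> p = 0).

Definition cycle_edge (n i j : nat) : bool :=
  [&& (1 <= i <= n)%N, (1 <= j <= n)%N &
      [|| j == i.+1, i == j.+1, (i == 1%N) && (j == n) | (i == n) && (j == 1%N)]].

(* tau ⊆ {0,...,n+1} is a face of B_n: contained in some facet {0,i,j} or {n+1,i,j}. *)
Definition Bn_face (n : nat) (tau : {set 'I_n.+2}) : bool :=
  [exists i : 'I_n.+2, exists j : 'I_n.+2,
    cycle_edge n i j &&
    ((tau \subset [set v : 'I_n.+2 | val v \in [:: 0%N; val i; val j]]) ||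
     (tau \subset [set v : 'I_n.+2 | val v \in [:: n.+1; val i; val j]]))].

Definition I_B (K : fieldType) (n : nat) : {mpoly K[n.+2]} -> Prop :=
  ideal_gen (fun p => exists tau : {set 'I_n.+2},
                ~~ Bn_face tau /\ p = \prod_(i in tau) 'X_i).
Arguments I_B : clear implicits.

(* Main.v *)
Require Import Defs.
From HB Require Import structures.
From mathcomp Require Import all_boot all_order all_algebra.
From mathcomp Require Import mpoly.
From mathcomp Require Import zify.
From Stdlib Require Import Lia.
Set Implicit Arguments. Unset Strict Implicit. Unset Printing Implicit Defensive.
Import Order.TTheory GRing.Theory.
Local Open Scope ring_scope.

Lemma widen_lift m (i : 'I_m) : widen_ord (leqnSn m) i = lift ord_max i.
Proof. apply: val_inj; exact: (esym (lift_max i)). Qed.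

Section IdealGen.
Variable R : comRingType.
Implicit Types S I : R -> Prop.

Lemma ig0 S : ideal_gen S 0.
Proof. by exists 0%N, (fun _ => 0), (fun _ => 0); split; [case | rewrite big_ord0]. Qed.

Lemma igS S x : S x -> ideal_gen S x.
Proof.
move=> Sx; exists 1%N, (fun _ => 1), (fun _ => x); split => // .
by rewrite big_ord1 mul1r.
Qed.

Lemma igD S a b : ideal_gen S a -> ideal_gen S b -> ideal_gen S (a + b).
Proof.
move=> [l1 [c1 [g1 [H1 ->]]]] [l2 [c2 [g2 [H2 ->]]]].
exists (l1 + l2)%N, (fun i => match split i with inl i => c1 i | inr i => c2 i end),
  (fun i => match split i with inl i => g1 i | inr i => g2 i end).
split.
  by move=> i; case: (split i).
rewrite big_split_ord /=; congr (_ + _); apply: eq_bigr => i _.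
  by rewrite (unsplitK (inl _)).
by rewrite (unsplitK (inr _)).
Qed.

Lemma igM S r a : ideal_gen S a -> ideal_gen S (r * a).
Proof.
move=> [l [c [g [H ->]]]]; exists l, (fun i => r * c i), g; split => //.
by rewrite mulr_sumr; apply: eq_bigr => i _; rewrite mulrA.
Qed.

Lemma ig_ideal S : is_ideal (ideal_gen S).
Proof. split; [exact: ig0 | exact: igD | exact: igM]. Qed.

Lemma ig_ind S (Q : R -> Prop) : Q 0 -> (forall a b, Q a -> Q b -> Q (a + b)) ->
  (forall r x, S x -> Q (r * x)) -> forall p, ideal_gen S p -> Q p.
Proof.
move=> Q0 QD QM p [l [c [g [H ->]]]]; elim/big_ind: _ => //.
by move=> i _; apply: QM.
Qed.

Lemma ipow0 I : ideal_pow I 0 1.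
Proof. by apply: igS; exists (fun _ => 0); split; [case | rewrite big_ord0]. Qed.

Lemma ipowS I m a b : ideal_pow I m a -> I b -> ideal_pow I m.+1 (a * b).
Proof.
move=> Ha Ib; rewrite mulrC; move: a Ha; apply: ig_ind.
- by rewrite mulr0; apply: ig0.
- by move=> x y Hx Hy; rewrite mulrDr; apply: igD.
move=> r x [g [Hg ->]]; rewrite mulrCA; apply: igM; apply: igS.
exists (fun i : 'I_m.+1 => match unlift ord_max i with Some j => g j | None => b end).
split.
  by move=> i; case: (unlift ord_max i).
rewrite big_ord_recr /= unlift_none mulrC; congr (_ * _).
by apply: eq_bigr => i _; rewrite widen_lift liftK.
Qed.

Lemma ipow_dec I m x : is_ideal I -> ideal_pow I m.+1 x -> ideal_pow I m x.
Proof.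
move=> [I0 ID IM]; move: x; apply: ig_ind; first exact: ig0.
  by move=> ? ? ? ?; apply: igD.
move=> r x [g [Hg ->]]; apply: igM.
case: m g Hg => [|m] g Hg.
  by rewrite -[X in ideal_gen _ X]mulr1; apply: igM; apply: ipow0.
rewrite big_ord_recr /= big_ord_recr /= -mulrA.
apply: igS.
exists (fun i : 'I_m.+1 => match unlift ord_max i with
   Some j => g (widen_ord (leqnSn _) (widen_ord (leqnSn _) j))
 | None => g (widen_ord (leqnSn _) ord_max) * g ord_max end).
split.
  move=> i; case: (unlift ord_max i) => [j|] //; rewrite mulrC; exact: IM.
rewrite big_ord_recr /= unlift_none; congr (_ * _).
by apply: eq_bigr => i _; rewrite [in RHS]widen_lift liftK.
Qed.

Lemma ipow_le I m m' x : is_ideal I -> (m <= m')%N -> ideal_pow I m' x -> ideal_pow I m x.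
Proof.
move=> HI /subnK <-; elim: (m' - m)%N => [|d IH] //=.
by move=> H; apply: IH; apply: ipow_dec.
Qed.

Lemma ipow_prod I k (F : 'I_k -> R) (b : 'I_k -> bool) :
  (forall l, b l -> I (F l)) -> ideal_pow I (\sum_(l < k) (b l : nat)) (\prod_(l < k) F l).
Proof.
elim: k F b => [|k IH] F b H.
  by rewrite !big_ord0; apply: ipow0.
rewrite !big_ord_recr /=.
have IH' := IH (fun l => F (widen_ord (leqnSn _) l)) (fun l => b (widen_ord (leqnSn _) l)) (fun l => H _).
case Hb: (b ord_max).
  by rewrite addn1; apply: ipowS => //; apply: H.
by rewrite addn0 mulrC; apply: igM.
Qed.
End IdealGen.

Section Faces.
Variable n : nat.
Hypothesis n4 : (4 <= n)%N.

Definition setL (L : seq nat) : {set 'I_n.+2} := [set v | val v \in L].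

Definition facet (L : seq nat) := exists c i j,
  L = [:: c; i; j] /\ (c = 0%N \/ c = n.+1) /\ cycle_edge n i j.

Lemma card_setL_le L : (#|setL L| <= size L)%N.
Proof.
rewrite cardE -(size_map val); apply: uniq_leq_size.
  by rewrite map_inj_uniq ?enum_uniq //; apply: val_inj.
by move=> x /mapP [v]; rewrite mem_enum inE => Hv ->.
Qed.

Lemma card_setL_ge L : uniq L -> all (fun x => x < n.+2)%N L -> (size L <= #|setL L|)%N.
Proof.
move=> uL aL; rewrite cardE -(size_map (@inord n.+1)); apply: uniq_leq_size.
  rewrite map_inj_in_uniq // => x y /(allP aL) Hx /(allP aL) Hy.
  by move/(congr1 (@nat_of_ord _)); rewrite !inordK.
move=> x /mapP [y Hy ->]; rewrite mem_enum inE /= inordK //; exact: (allP aL).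
Qed.

Lemma face_card (tau : {set 'I_n.+2}) : Bn_face tau -> (#|tau| <= 3)%N.
Proof.
move=> /existsP [i /existsP [j /andP [_ /orP [H|H]]]].
  apply: leq_trans (subset_leq_card H) _.
  exact: (card_setL_le [:: 0%N; val i; val j]).
apply: leq_trans (subset_leq_card H) _.
exact: (card_setL_le [:: n.+1; val i; val j]).
Qed.

Lemma nonface_card (tau : {set 'I_n.+2}) : (3 < #|tau|)%N -> ~~ Bn_face tau.
Proof. by move=> H; apply/negP => /face_card; rewrite leqNgt H. Qed.

Lemma cycle_edge_le i j : cycle_edge n i j -> [/\ (1 <= i <= n)%N, (1 <= j <= n)%N & i != j].
Proof.
rewrite /cycle_edge => /and3P [Hi Hj /or4P H]; split => //.
move: Hi Hj; case: H => /eqP; try lia; move=> /andP [/eqP -> /eqP ->]; lia.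
Qed.

Lemma facet_face L (tau : {set 'I_n.+2}) : facet L -> tau \subset setL L -> Bn_face tau.
Proof.
move=> [c [i [j [-> [Hc He]]]]] Hs.
have [/andP [_ Hi] /andP [_ Hj] _] := cycle_edge_le He.
have Hi' : (i < n.+2)%N by lia.
have Hj' : (j < n.+2)%N by lia.
apply/existsP; exists (inord i); apply/existsP; exists (inord j).
rewrite !inordK // He /=.
by case: Hc => Hc; subst c; apply/orP; [left|right]; apply: (subset_trans Hs); apply/subsetP => v; rewrite !inE /= !inordK.
Qed.

Lemma face_facet (tau : {set 'I_n.+2}) : Bn_face tau -> exists L, facet L /\ tau \subset setL L.
Proof.
move=> /existsP [i /existsP [j /andP [He /orP [H|H]]]].
  by exists [:: 0%N; val i; val j]; split => //; exists 0%N, (val i), (val j); split; [|split; [left|]].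
by exists [:: n.+1; val i; val j]; split => //; exists n.+1, (val i), (val j); split; [|split; [right|]].
Qed.

Lemma facet_card L : facet L -> #|setL L| = 3%N.
Proof.
move=> HL; apply/eqP; rewrite eqn_leq.
move: HL => [c [i [j [-> [Hc He]]]]].
rewrite (card_setL_le [:: c; i; j]) /=.
have [/andP [Hi1 Hi] /andP [Hj1 Hj] Hij] := cycle_edge_le He.
apply: (card_setL_ge (L := [:: c; i; j])) => /=.
  rewrite !inE negb_or Hij andbT; case: Hc => ->; apply/andP; split; apply/eqP; lia.
by case: Hc => ->; rewrite /=; repeat (apply/andP; split) => //; lia.
Qed.

Lemma facet_ext L v : facet L -> val v \notin L -> ~~ Bn_face (v |: setL L).
Proof.
move=> HL Hv; apply: nonface_card; rewrite cardsU1 facet_card //.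
by rewrite inE Hv.
Qed.

Lemma facet_cover (v : 'I_n.+2) : exists L, facet L /\ nat_of_ord v \in L.
Proof.
have e12 : cycle_edge n 1 2 by rewrite /cycle_edge; apply/and3P; split; [apply/andP; split; lia|apply/andP; split; lia| rewrite eqxx].
case: (ltnP (nat_of_ord v) 1) => H0.
  exists [:: 0%N; 1%N; 2%N]; split; first by exists 0%N, 1%N, 2%N; split => //; split => //; left.
  by rewrite inE; apply/orP; left; apply/eqP; lia.
case: (ltnP (nat_of_ord v) n) => H1.
  exists [:: 0%N; nat_of_ord v; (nat_of_ord v).+1]; split; last by rewrite !inE eqxx orbT.
  exists 0%N, (nat_of_ord v), (nat_of_ord v).+1; split => //; split; first by left.
  rewrite /cycle_edge; apply/and3P; split; [apply/andP; split; lia|apply/andP; split; lia| by rewrite eqxx].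
case: (ltnP (nat_of_ord v) n.+1) => H2.
  exists [:: 0%N; (nat_of_ord v - 1)%N; nat_of_ord v]; split; last by rewrite !inE eqxx !orbT.
  exists 0%N, (nat_of_ord v - 1)%N, (nat_of_ord v); split => //; split; first by left.
  rewrite /cycle_edge; apply/and3P; split; [apply/andP; split; lia|apply/andP; split; lia| ].
  apply/orP; left; apply/eqP; lia.
exists [:: n.+1; 1%N; 2%N]; split; first by exists n.+1, 1%N, 2%N; split => //; split; [right|].
rewrite inE; apply/orP; left; apply/eqP; have := ltn_ord v; lia.
Qed.

End Faces.

Section Theta.
Variables (K : fieldType) (n : nat).
Local Notation P := {mpoly K[n.+2]}.

Definition fC : {rmorphism K -> {poly P}} := (@polyC _) \o (@mpolyC n.+2 K).
Definition hL (L : seq nat) (v : 'I_n.+2) : {poly P} := ('X_v)%:P * 'X ^+ (val v \notin L).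
Definition th (L : seq nat) : {rmorphism P -> {poly P}} := mmap fC (hL L).
Definition od (L : seq nat) (m : 'X_{1..n.+2}) := (\sum_(i < n.+2) (val i \notin L) * m i)%N.

Lemma thE L p : th L p = mmap fC (hL L) p.
Proof. by []. Qed.

Lemma th_X L m : th L 'X_[m] = ('X_[m])%:P * 'X ^+ (od L m).
Proof.
rewrite thE mmapX /mmap1 /hL.
rewrite (eq_bigr (fun i => ('X_i ^+ m i)%:P * 'X ^+ ((val i \notin L) * m i)%N)); last first.
  by move=> i _; rewrite exprMn rmorphXn exprM.
rewrite big_split /= -rmorph_prod -mpolyXE_id; congr (_ * _).
by rewrite prodrXr.
Qed.

Lemma th_C L c : th L c%:MP = (c%:MP)%:P.
Proof. by rewrite thE mmapC. Qed.

Lemma th_E L p : th L p = \sum_(m <- msupp p) (p@_m *: 'X_[m]) *: 'X ^+ (od L m).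
Proof.
rewrite {1}(mpolyE p) rmorph_sum; apply: eq_bigr => m _.
by rewrite -mul_mpolyC rmorphM th_C th_X mulrA -rmorphM mul_polyC mul_mpolyC.
Qed.

Lemma th_coef L p j m : ((th L p)`_j)@_m = if od L m == j then p@_m else 0.
Proof.
rewrite th_E coef_sum raddf_sum /=.
rewrite (eq_bigr (fun m' => if m' == m then (if od L m == j then p@_m else 0) else 0)); last first.
  move=> m' _; rewrite coefZ coefXn mulr_natr raddfMn /= mcoeffZ mcoeffX.
  case: (eqVneq m' m) => [->|ne]; last by rewrite mulr0 mul0rn.
  rewrite mulr1 eq_sym; by case: (od L m == j).
case Hm: (m \in msupp p).
  rewrite (bigD1_seq m) ?msupp_uniq //= eqxx big1 ?addr0 //.
  by move=> i /negbTE ->.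
rewrite big_seq big1 => [|i Hi]; last first.
  by case: eqP Hi => // ->; rewrite Hm.
by rewrite memN_msupp_eq0 ?Hm //; case: ifP.
Qed.

End Theta.

Section Main.
Variables (K : fieldType) (n : nat).
Hypothesis n4 : (4 <= n)%N.
Local Notation P := {mpoly K[n.+2]}.
Local Notation IB := (I_B K n).
Local Notation th := (@th K n).
Local Notation hL := (@hL K n).
Local Notation od := (@od n).

Lemma IB_ideal : is_ideal IB.
Proof. exact: ig_ideal. Qed.

Lemma gen_I (tau : {set 'I_n.+2}) : ~~ Bn_face tau -> IB (\prod_(v in tau) 'X_v).
Proof. by move=> H; apply: igS; exists tau. Qed.

Lemma IB_sum (T : eqType) (r : seq T) (F : T -> P) :
  (forall x, x \in r -> IB (F x)) -> IB (\sum_(x <- r) F x).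
Proof.
move=> H; rewrite big_seq; elim/big_ind: _ => //; first exact: ig0.
  by move=> ? ? ? ?; apply: igD.
Qed.

Lemma IB_M (a b : P) : IB b -> IB (a * b).
Proof. exact: igM. Qed.

Lemma monoI (e : 'I_n.+2 -> nat) : ~~ Bn_face [set i | (0 < e i)%N] ->
  IB (\prod_(i < n.+2) 'X_i ^+ e i).
Proof.
set tau := [set i | _] => Ht.
rewrite (eq_bigr (fun i => 'X_i ^+ (i \in tau) * 'X_i ^+ (e i - (i \in tau))%N)); last first.
  move=> i _; rewrite -exprD subnKC //; rewrite inE; by case: (e i).
rewrite big_split /= mulrC; apply: IB_M.
rewrite (eq_bigr (fun i => if i \in tau then 'X_i else 1)); last first.
  by move=> i _; case: (i \in tau); rewrite ?expr1 ?expr0.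
by rewrite -big_mkcond; apply: gen_I.
Qed.

Lemma memI (f : P) : (forall m, m \in msupp f -> ~~ Bn_face [set i | (0 < m i)%N]) -> IB f.
Proof.
move=> H; rewrite (mpolyE f); apply: IB_sum => m Hm.
rewrite -mul_mpolyC; apply: IB_M; rewrite mpolyXE_id; apply: monoI; exact: H.
Qed.

Lemma mpolyX_neq0 (m : 'X_{1..n.+2}) : 'X_[m] != 0 :> P.
Proof.
apply/eqP => /(congr1 (mcoeff m)); rewrite mcoeffX eqxx mcoeff0 => /eqP.
by rewrite oner_eq0.
Qed.

Definition XL (L : seq nat) : P := \prod_(v in setL n L) 'X_v.

Lemma XL_neq0 L : XL L != 0.
Proof. by apply/prodf_neq0 => v _; apply: mpolyX_neq0. Qed.

Lemma th_Xv L (v : 'I_n.+2) : th L 'X_v = hL L v.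
Proof. by rewrite thE mmapX mmap1U. Qed.

Lemma th_XL L : th L (XL L) = (XL L)%:P.
Proof.
rewrite rmorph_prod rmorph_prod; apply: eq_bigr => v Hv.
by rewrite th_Xv /hL; rewrite inE in Hv; rewrite Hv expr0 mulr1.
Qed.

Lemma th_gen L (S : P -> Prop) r p :
  (forall x, S x -> exists q, th L x = 'X ^+ r * q) ->
  ideal_gen S p -> exists q, th L p = 'X ^+ r * q.
Proof.
move=> HS; move: p; apply: (ig_ind (Q := fun p => exists q, th L p = 'X ^+ r * q)).
- by exists 0; rewrite rmorph0 mulr0.
- by move=> a b [qa Ha] [qb Hb]; exists (qa + qb); rewrite rmorphD Ha Hb mulrDr.
- move=> c x /HS [q Hq]; exists (th L c * q).
  by rewrite rmorphM Hq mulrCA.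
Qed.

Lemma th_I L p : facet n L -> IB p -> exists q, th L p = 'X ^+ 1 * q.
Proof.
move=> HL; apply: th_gen => x [tau [Ht ->]].
have [v Hv HvL] : exists2 v, v \in tau & val v \notin L.
  apply/exists_inP; rewrite -negb_forall_in; apply/negP => /forall_inP H.
  move/negP: Ht; apply; apply: (facet_face n4 HL).
  by apply/subsetP => v /H Hv; rewrite inE.
rewrite rmorph_prod (bigD1 v) //= th_Xv /hL HvL expr1.
by exists (('X_v)%:P * \prod_(i in tau | i != v) th L 'X_i); rewrite mulrA [_ * 'X]mulrC.
Qed.

Lemma th_prodX L r (g : 'I_r -> P) :
  (forall i, exists q, th L (g i) = 'X ^+ 1 * q) ->
  exists q, th L (\prod_(i < r) g i) = 'X ^+ r * q.
Proof.
elim: r g => [|r IH] g H.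
  by exists 1; rewrite !big_ord0 rmorph1 mulr1.
have [q1 Hq1] := IH (fun i => g (widen_ord (leqnSn _) i)) (fun i => H _).
have [q2 Hq2] := H ord_max.
exists (q1 * q2); rewrite big_ord_recr rmorphM Hq1 Hq2 expr1 exprSr -!mulrA.
by congr (_ * _); rewrite mulrCA.
Qed.

Lemma th_Ipow L r p : facet n L -> ideal_pow IB r p -> exists q, th L p = 'X ^+ r * q.
Proof.
move=> HL; apply: th_gen => x [g [Hg ->]].
by apply: th_prodX => i; apply: th_I.
Qed.


Lemma od_pos L m : od L m != 0%N -> exists2 v : 'I_n.+2, val v \notin L & (0 < m v)%N.
Proof.
move=> Hod; case: (pickP (fun v : 'I_n.+2 => ((val v \notin L) * m v != 0)%N)) => [v Hv | H]; last first.
  have E : od L m = 0%N.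
    rewrite /od big1 // => i _; apply/eqP; apply: negbFE; exact: H i.
  by rewrite E in Hod.
move: Hv; case E: (val v \notin L) => //=; rewrite mul1n -lt0n => Hv.
by exists v; rewrite ?E.
Qed.

Lemma XL_E L : XL L = \prod_(i < n.+2) 'X_i ^+ (i \in setL n L).
Proof.
rewrite /XL big_mkcond /=; apply: eq_bigr => i _.
by case: (i \in setL n L); rewrite ?expr1 ?expr0.
Qed.

End Main.

Section Main2.
Variables (K : fieldType) (n : nat).
Hypothesis n4 : (4 <= n)%N.
Local Notation P := {mpoly K[n.+2]}.
Local Notation IB := (I_B K n).
Local Notation th := (@th K n).
Local Notation hL := (@hL K n).
Local Notation od := (@od n).
Local Notation XL := (@XL K n).
Definition phi L (h : P) : P := (th L h)`_0.
Lemma phiD L a b : phi L (a + b) = phi L a + phi L b.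
Proof. by rewrite /phi rmorphD coefD. Qed.
Lemma phiM L a b : phi L (a * b) = phi L a * phi L b.
Proof. by rewrite /phi rmorphM coef0M. Qed.
Lemma phi0 L : phi L 0 = 0.
Proof. by rewrite /phi rmorph0 coef0. Qed.
Lemma phi1 L : phi L 1 = 1.
Proof. by rewrite /phi rmorph1 coef1. Qed.
Lemma phi_coef L h m : (phi L h)@_m = if od L m == 0%N then h@_m else 0.
Proof. exact: th_coef. Qed.

Lemma phi_XL L : phi L (XL L) = XL L.
Proof. by rewrite /phi th_XL coefC. Qed.

Lemma phi_I L p : facet n L -> IB p -> phi L p = 0.
Proof.
move=> HL H; have [q Hq] := th_I n4 HL H.
by rewrite /phi Hq coefXnM.
Qed.

Lemma assocP L : facet n L -> associated_prime IB (fun h => phi L h = 0).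
Proof.
move=> HL; split.
  split.
  - split.
    + exact: phi0.
    + by move=> a b Ha Hb; rewrite phiD Ha Hb addr0.
    + by move=> r a Ha; rewrite phiM Ha mulr0.
  - by rewrite phi1 => /eqP; rewrite oner_eq0.
  - move=> a b; rewrite phiM => /eqP; rewrite mulf_eq0.
    by case/orP => /eqP ->; [left|right].
exists (XL L) => h; split.
  move=> H0; rewrite (mpolyE h) mulr_suml; apply: IB_sum => m Hm.
  have Hod : od L m != 0%N.
    apply/negP => /eqP E; have := phi_coef L h m; rewrite H0 mcoeff0 E eqxx.
    by move=> /esym /eqP; rewrite mcoeff_eq0 Hm.
  have [v Hv Hmv] := od_pos Hod.
  rewrite -mul_mpolyC -mulrA; apply: IB_M.
  rewrite XL_E mpolyXE_id -big_split /=.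
  rewrite (eq_bigr (fun i => 'X_i ^+ (m i + (i \in setL n L))%N)); last first.
    by move=> i _; rewrite exprD.
  apply: monoI; apply: nonface_card.
  have Hs : v |: setL n L \subset [set i | (0 < m i + (i \in setL n L))%N].
    apply/subsetP => i; rewrite !inE => /orP [/eqP ->|->]; first by rewrite addn_gt0 Hmv.
    by rewrite addn1.
  apply: leq_trans (subset_leq_card Hs); rewrite cardsU1 (facet_card n4 HL).
  by rewrite inE Hv.
move=> H; have := phi_I HL H; rewrite phiM phi_XL => /eqP.
by rewrite mulf_eq0 (negbTE (@XL_neq0 K n L)) orbF => /eqP.
Qed.
Lemma phi_cancel L a b : phi L (a * b) = 0 -> phi L b != 0 -> phi L a = 0.
Proof.
rewrite phiM => /eqP; rewrite mulf_eq0 => /orP [/eqP -> //|/eqP ->].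
by rewrite eqxx.
Qed.

Lemma phiX L x e : phi L (x ^+ e) = phi L x ^+ e.
Proof. by elim: e => [|e IH]; rewrite ?expr0 ?phi1 // !exprS phiM IH. Qed.

Lemma XLk_neq0 L e : XL L ^+ e != 0.
Proof. by rewrite expf_neq0 // XL_neq0. Qed.

End Main2.

Lemma cancelX (R : idomainType) r (a b q : {poly R}) : a`_0 != 0 -> a * b = 'X ^+ r * q ->
  exists q', b = 'X ^+ r * q'.
Proof.
move=> Ha; elim: r b q => [|r IH] b q.
  by move=> _; exists b; rewrite expr0 mul1r.
move=> E.
have Hb0 : b`_0 = 0.
  have : (a * b)`_0 = ('X ^+ r.+1 * q)`_0 by rewrite E.
  rewrite coef0M coefXnM /= => /eqP.
  by rewrite mulf_eq0 (negbTE Ha) => /eqP.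
pose b' := \poly_(i < size b) b`_i.+1.
have Eb : b = 'X * b'.
  apply/polyP => i; rewrite coefXM; case: i => [|i] //=.
  rewrite coef_poly; case: ltnP => // Hi.
  by rewrite nth_default //; apply: leq_trans Hi _.
move: E; rewrite Eb exprS mulrCA -mulrA => /(mulfI (negbT (polyX_eq0 _))) /IH [q' ->].
by exists q'; rewrite mulrA.
Qed.

Lemma cycle_edge_P n i j : cycle_edge n i j ->
  [/\ (1 <= i <= n)%N, (1 <= j <= n)%N &
   (j = i.+1 \/ i = j.+1 \/ (i = 1 /\ j = n) \/ (i = n /\ j = 1))%N].
Proof.
rewrite /cycle_edge => /and3P [Hi Hj H]; split => //.
case/or4P: H => [/eqP|/eqP|/andP [/eqP ? /eqP ?]|/andP [/eqP ? /eqP ?]]; tauto.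
Qed.

Lemma count_ge k (b : 'I_k -> bool) : (forall l1 l2, l1 != l2 -> b l1 || b l2) ->
  (k - 1 <= \sum_(l < k) (b l : nat))%N.
Proof.
move=> H; case: (pickP (fun l => ~~ b l)) => [l0 Hl0 | H0].
  rewrite (bigD1 l0) //= (negbTE Hl0) add0n.
  rewrite (eq_bigr (fun _ => 1%N)); last first.
    by move=> l Hl; have := H l l0 Hl; rewrite (negbTE Hl0) orbF => ->.
  rewrite sum1_card cardC1 card_ord; lia.
rewrite (eq_bigr (fun _ => 1%N)); last first.
  by move=> l _; have := H0 l; move/negbFE => ->.
rewrite sum1_card card_ord; lia.
Qed.

Lemma od_bound n (L : seq nat) m (v : 'I_n.+2) : val v \in L -> (od L m + m v <= mdeg m)%N.
Proof.
move=> Hv; rewrite mdegE /od (bigD1 v) //= [X in (_ <= X)%N](bigD1 v) //= Hv mul0n add0n addnC.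
rewrite leq_add2l; apply: leq_sum => i _; by case: (val i \notin L); rewrite ?mul1n ?mul0n.
Qed.

Lemma od_zero n (L : seq nat) (m : 'X_{1..n.+2}) : (forall v, val v \notin L -> m v = 0%N) -> od L m = 0%N.
Proof.
move=> H; rewrite /od big1 // => i _; case E: (val i \notin L); last by [].
by rewrite H.
Qed.

Lemma main_gen (K : fieldType) (k n : nat) :
  (2 <= k)%N -> (2 * k <= n)%N ->
  alpha_is (symbolic_power (I_B K n) (k - 1)) k.
Proof.
move=> Hk Hn.
have n4 : (4 <= n)%N by lia.
split.
  pose a (l : 'I_k) : 'I_n.+2 := inord (2 * l + 1).
  have va l : val (a l) = (2 * l + 1)%N.
    rewrite /a /= inordK //; have := ltn_ord l; lia.
  pose mg := (\sum_(l < k) U_(a l))%MM.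
  pose g : {mpoly K[n.+2]} := \prod_(l < k) 'X_(a l).
  have Eg : g = 'X_[mg].
    by rewrite /g /mg (big_morph (fun m => 'X_[m] : {mpoly K[n.+2]}) (@mpolyXD _ K) (mpolyX0 _ K)).
  exists g; split; last split.
  - move=> Q [[HQid HQ1 HQpr] [f Hf]].
    have nIf : ~ I_B K n f by move=> H; apply: HQ1; apply/Hf; rewrite mul1r.
    have [m Hm Hface] : exists2 m, m \in msupp f & Bn_face [set i | (0 < m i)%N].
      case: (boolP (has (fun m : 'X_{1..n.+2} => Bn_face [set i | (0 < m i)%N]) (msupp f))) => [/hasP [m Hm Hf']|H]; first by exists m.
      exfalso; apply: nIf; apply: memI => m Hm; exact: (hasPn H m Hm).
    have [L [HL Hsub]] := face_facet Hface.
    have od0 : od L m = 0%N.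
      apply: od_zero => v Hv; apply/eqP; rewrite eqn0Ngt; apply/negP => Hmv.
      have : v \in setL n L by apply: (subsetP Hsub); rewrite inE.
      by rewrite inE (negbTE Hv).
    have phif : phi L f != 0.
      apply/eqP => E; have := phi_coef L f m; rewrite E mcoeff0 od0 eqxx => /esym /eqP.
      by rewrite mcoeff_eq0 Hm.
    have QL h : Q h -> phi L h = 0.
      by move=> /Hf /(phi_I n4 HL) /phi_cancel; apply.
    exists (XL K n L ^+ k); split.
      move/QL; rewrite phiX phi_XL => /eqP.
      by rewrite (negbTE (XLk_neq0 K n L k)).
    rewrite -[X in XL K n L ^+ X]card_ord -prodr_const -big_split /=.
    apply: (ipow_le (IB_ideal K n) (count_ge (b := fun l => val (a l) \notin L) _)).
      move=> l1 l2 Hne; rewrite -negb_and; apply/negP => /andP [H1 H2].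
      have Hne' : (nat_of_ord l1 != nat_of_ord l2) := Hne.
      move: HL => [c [i [j [EL [Hc He]]]]]; have [Hi Hj Hij] := cycle_edge_P He.
      move/andP: Hi => [Hi1 Hi2]; move/andP: Hj => [Hj1 Hj2].
      have := ltn_ord l1; have := ltn_ord l2.
      move: H1 H2; rewrite EL !inE !va => /or3P [] /eqP E1 /or3P [] /eqP E2; lia.
    apply: ipow_prod => l Hl.
    rewrite mulrC /XL -big_setU1 /=; last by rewrite inE.
    apply: gen_I; apply: nonface_card; rewrite cardsU1 inE Hl (facet_card n4 HL).
    by [].
  - by rewrite Eg mpolyX_neq0.
  - by rewrite Eg /homog_of_deg msuppX /= andbT mdeg_sum (eq_bigr (fun _ => 1%N)) ?sum1_card ?card_ord // => l _; rewrite mdeg1.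
move=> t' p Ht' Hsym Hhom; apply/eqP; apply/negPn/negP => Hp0.
have : msupp p != [::] by rewrite msupp_eq0.
case Es: (msupp p) => [|m s] // _.
have Hm : m \in msupp p by rewrite Es inE eqxx.
have Hdeg : mdeg m = t' by move/allP: Hhom => /(_ m Hm) /eqP.
have [L HL Hod] : exists2 L, facet n L & (od L m < k - 1)%N.
  case: (pickP (fun v : 'I_n.+2 => (0 < m v)%N)) => [v Hv | H0].
    have [L [HL HvL]] := facet_cover n4 v.
    by exists L => //; have := od_bound m HvL; lia.
  have [L [HL _]] := facet_cover n4 ord0.
  exists L => //; rewrite od_zero; first lia.
  by move=> v _; have := H0 v; move/negbT; rewrite -leqNgt leqn0 => /eqP.
have [s' [Hs Hsp]] := Hsym _ (assocP K n4 HL).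
have [q Hq] := th_Ipow n4 HL Hsp.
rewrite rmorphM in Hq.
have Hs' : (th K n L s')`_0 != 0 by apply/eqP.
have [q' Hq'] := cancelX Hs' Hq.
have := th_coef L p (od L m) m; rewrite Hq' coefXnM Hod mcoeff0 eqxx => /esym /eqP.
by rewrite mcoeff_eq0 Hm.
Qed.

Theorem proposition3p15 (K : fieldType) (k t : nat) :
  (2 <= k)%N ->
  alpha_is (symbolic_power (I_B K (2 * k + t)) (k - 1)) k.
Proof. by move=> Hk; apply: main_gen => //; lia. Qed.
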